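(* Let $k\ge1$ and $n\ge 2^k-1$ be integers, and set $n_2=2^k-1$, $n_1=n-n_2$. Then in the binary symmetric channel with a single error and one-time feedback (after the first $n_1$ symbols), one can transmit $$M_1(n)=2^{n_1}\left\lfloor\frac{2^{n_2}}{n_1+n_2+1}\right\rfloor$$ messages with a single-error-correcting strategy.
   Context: Binary symmetric channel: alphabet $\{0,1\}$, an error replaces a symbol by the other symbol; ''a single error'' means at most one error in the whole transmission. A strategy with one-time feedback after $n_1$ symbols for messages $m\in[M]$: the first $n_1$ transmitted symbols depend only on $m$; then the encoder learns the $n_1$ received symbols (error-free, instantaneously), and the remaining $n_2$ symbols depend on $m$ and those received symbols. It transmits $M$ messages with a single error if the sets of output sequences reachable from distinct messages with at most one error are pairwise disjoint. *)

(* Defs.v *)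
From mathcomp Require Import all_boot.
Set Implicit Arguments. Unset Strict Implicit. Unset Printing Implicit Defensive.

Definition word (n : nat) := {ffun 'I_n -> bool}.

Definition hdist (n : nat) (x y : word n) : nat := #|[pred i | x i != y i]|.

(* A strategy with one-time feedback after n1 symbols for messages in [M]
   (represented by 'I_M): the first n1 symbols depend only on the message;
   the last n2 symbols depend on the message and the n1 received symbols. *)
Record strategy (M n1 n2 : nat) := Strategy {
  enc1 : 'I_M -> word n1;
  enc2 : 'I_M -> word n1 -> word n2 }.

(* Output (y1, y2) is reachable from message m with at most one error
   in the whole transmission (y1 = received first block, which is what the
   encoder sees as feedback). *)
Definition reachable M n1 n2 (S : strategy M n1 n2) (m : 'I_M)
  (y1 : word n1) (y2 : word n2) : Prop :=
  hdist (enc1 S m) y1 + hdist (enc2 S m y1) y2 <= 1.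

Definition transmits_single_error M n1 n2 (S : strategy M n1 n2) : Prop :=
  forall (m m' : 'I_M) (y1 : word n1) (y2 : word n2),
    m != m' -> reachable S m y1 y2 -> reachable S m' y1 y2 -> False.

(* Main.v *)
Require Import Defs.
From mathcomp Require Import all_boot.
Set Implicit Arguments. Unset Strict Implicit. Unset Printing Implicit Defensive.

Definition xorf (I : finType) (x y : {ffun I -> bool}) : {ffun I -> bool} :=
  [ffun i => x i (+) y i].
Definition zf (I : finType) : {ffun I -> bool} := [ffun => false].

Lemma xorfA (I : finType) (x y z : {ffun I -> bool}) :
  xorf x (xorf y z) = xorf (xorf x y) z.
Proof. by apply/ffunP => i; rewrite !ffunE addbA. Qed.
Lemma xorfK (I : finType) (x y : {ffun I -> bool}) : xorf (xorf x y) y = x.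
Proof. by apply/ffunP => i; rewrite !ffunE -addbA addbb addbF. Qed.
Lemma xorf0 (I : finType) (x : {ffun I -> bool}) : xorf x (zf I) = x.
Proof. by apply/ffunP => i; rewrite !ffunE addbF. Qed.
Lemma xor0f (I : finType) (x : {ffun I -> bool}) : xorf (zf I) x = x.
Proof. by apply/ffunP => i; rewrite !ffunE. Qed.
Lemma xorfxx (I : finType) (x : {ffun I -> bool}) : xorf x x = zf I.
Proof. by apply/ffunP => i; rewrite !ffunE addbb. Qed.
Lemma xorf_inj (I : finType) (x y z : {ffun I -> bool}) : xorf x z = xorf y z -> x = y.
Proof. by move=> h; rewrite -(xorfK x z) h xorfK. Qed.

Definition V k := {ffun 'I_k -> bool}.
Definition uu k K (hV : #|V k| = K.+1) (s : nat) : V k :=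
  enum_val (cast_ord (esym hV) (inord s)).
Definition vv k K (hV : #|V k| = K.+1) s : V k := xorf (uu hV s) (uu hV 0).
Definition syn k K (hV : #|V k| = K.+1) (x : word K) : V k :=
  [ffun j => \big[addb/false]_(i < K) (x i && vv hV i.+1 j)].
Definition ee K s : word K := [ffun i : 'I_K => i.+1 == s].
Definition Cset k K (hV : #|V k| = K.+1) := [set x : word K | syn hV x == zf _].

Lemma syn_xor k K (hV : #|V k| = K.+1) x y :
  syn hV (xorf x y) = xorf (syn hV x) (syn hV y).
Proof.
apply/ffunP => j; rewrite !ffunE -big_split; apply: eq_bigr => i _.
by rewrite ffunE; case: (x i); case: (y i); case: (vv hV i.+1 j).
Qed.

Lemma syn_ee k K (hV : #|V k| = K.+1) s : s <= K -> syn hV (ee K s) = vv hV s.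
Proof.
case: s => [|p] hs.
  apply/ffunP => j; rewrite !ffunE big1 => [|i _]; last by rewrite ffunE.
  by rewrite addbb.
apply/ffunP => j; rewrite ffunE (bigD1 (Ordinal hs)) //= big1 => [|i ne].
  by rewrite ffunE eqxx addbF.
rewrite ffunE eqSS; case: eqP => // ei; case/eqP: ne; exact: val_inj.
Qed.

Lemma vv_inj k K (hV : #|V k| = K.+1) s s' : s <= K -> s' <= K ->
  vv hV s = vv hV s' -> s = s'.
Proof.
move=> hs hs' /xorf_inj /enum_val_inj /cast_ord_inj /(congr1 (@nat_of_ord _)).
by rewrite !inordK.
Qed.

Lemma vv_surj k K (hV : #|V k| = K.+1) t : exists2 s, s <= K & vv hV s = t.
Proof.
exists (val (cast_ord hV (enum_rank (xorf t (uu hV 0))))).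
  by rewrite -ltnS ltn_ord.
rewrite /vv /uu inord_val.
have -> : cast_ord (esym hV) (cast_ord hV (enum_rank (xorf t (uu hV 0))))
   = enum_rank (xorf t (uu hV 0)) by apply: val_inj.
by rewrite enum_rankK xorfK.
Qed.

Definition sur k K (hV : #|V k| = K.+1) (t : V k) : nat :=
  val (cast_ord hV (enum_rank (xorf t (uu hV 0)))).
Lemma surP k K (hV : #|V k| = K.+1) t : sur hV t <= K /\ vv hV (sur hV t) = t.
Proof.
split; first by rewrite -ltnS ltn_ord.
rewrite /vv /uu /sur inord_val.
have -> : cast_ord (esym hV) (cast_ord hV (enum_rank (xorf t (uu hV 0))))
   = enum_rank (xorf t (uu hV 0)) by apply: val_inj.
by rewrite enum_rankK xorfK.
Qed.

Lemma card_word K : #|{: word K}| = 2 ^ K.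
Proof. by rewrite /word card_ffun card_bool card_ord. Qed.

Lemma count_C k K (hV : #|V k| = K.+1) : 2 ^ K <= #|Cset hV| * K.+1.
Proof.
pose f (x : word K) : word K * 'I_K.+1 :=
  (xorf x (ee K (sur hV (syn hV x))), inord (sur hV (syn hV x))).
have finj : injective f.
  move=> x y [] e1 /(congr1 (@nat_of_ord _)).
  rewrite !inordK; try by rewrite ltnS; case: (surP hV (syn hV y)).
  2: by rewrite ltnS; case: (surP hV (syn hV x)).
  by move=> e2; move: e1; rewrite e2 => /xorf_inj.
have -> : #|Cset hV| * K.+1 = #|setX (Cset hV) [set: 'I_K.+1]|
  by rewrite cardsX cardsT card_ord.
rewrite -(card_word K) -(card_imset predT finj).
apply: subset_leq_card; apply/subsetP => _ /imsetP [x _ ->].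
rewrite inE /= in_setT andbT inE syn_xor syn_ee; last by case: (surP hV (syn hV x)).
by case: (surP hV (syn hV x)) => _ ->; rewrite xorfxx.
Qed.

Lemma phi_inj k K (hV : #|V k| = K.+1) c c' s s' :
  c \in Cset hV -> c' \in Cset hV -> s <= K -> s' <= K ->
  xorf c (ee K s) = xorf c' (ee K s') -> c = c' /\ s = s'.
Proof.
rewrite !inE => /eqP hc /eqP hc' hs hs' e.
have : syn hV (xorf c (ee K s)) = syn hV (xorf c' (ee K s')) by rewrite e.
rewrite !syn_xor hc hc' !syn_ee // !xor0f => /(vv_inj hs hs') es'.
by move: e; rewrite es' => /xorf_inj.
Qed.

Lemma hdist0 n (x y : word n) : hdist x y = 0 -> x = y.
Proof.
move/card0_eq => h; apply/ffunP => i; have := h i; rewrite !inE /=.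
by move/negbFE/eqP.
Qed.

Lemma hdist1 n (x y : word n) : hdist x y = 1 ->
  exists p : 'I_n, forall i, (x i != y i) = (i == p).
Proof. by case/mem_card1 => p hp; exists p => i; have := hp i; rewrite !inE. Qed.

Lemma ball K (x y : word K) : hdist x y <= 1 ->
  exists2 s, s <= K & y = xorf x (ee K s).
Proof.
case hd: (hdist x y) => [|[|//]] _.
  by exists 0 => //; rewrite (hdist0 hd); apply/ffunP => i; rewrite !ffunE addbF.
case: (hdist1 hd) => p hp; exists p.+1; first exact: ltn_ord.
apply/ffunP => i; rewrite !ffunE eqSS; have := hp i.
have -> : (nat_of_ord i == p) = (i == p) by [].
by case: (i == p); case: (x i); case: (y i).
Qed.

From mathcomp Require Import zify.

Lemma divmod_inj a a' b b' B : b < B -> b' < B -> a * B + b = a' * B + b' ->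
  a = a' /\ b = b'.
Proof.
move=> hb hb' e.
have B0 : 0 < B by apply: leq_ltn_trans hb.
have h1 := congr1 (fun z => z %/ B) e; have h2 := congr1 (fun z => z %% B) e.
move: h1 h2 => /=; rewrite !divnMDl // !modnMDl !divn_small // !modn_small //.
by rewrite !addn0 => -> ->.
Qed.

Lemma ee0 K : ee K 0 = zf _.
Proof. by apply/ffunP => i; rewrite !ffunE. Qed.

Lemma code n1 k K (hV : #|V k| = K.+1) :
  let B := 2 ^ K %/ (n1 + K + 1) in
  exists w : nat -> nat -> word K,
  [/\ (forall b b' y, b < B -> b' < B -> hdist (w 0 b) y <= 1 ->
          hdist (w 0 b') y <= 1 -> b = b'),
      (forall c b b', 0 < c <= n1 -> b < B -> b' < B ->
          hdist (w 0 b') (w c b) <= 1 -> False) &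
      (forall c c' b b', 0 < c <= n1 -> 0 < c' <= n1 -> b < B -> b' < B ->
          w c b = w c' b' -> c = c' /\ b = b')].
Proof.
move=> B.
pose q := K.+1.
pose J c b := if c == 0 then b * q else B * q + (c.-1 * B + b).
pose cw j := nth (zf _) (enum (Cset hV)) j.
pose D := #|Cset hV|.
have hB : B * (n1 + K + 1) <= 2 ^ K by apply: leq_divM.
have hC := count_C hV.
have cwC j : j < D -> cw j \in Cset hV.
  by move=> hj; rewrite -mem_enum; apply: mem_nth; rewrite -cardE.
have cwI j j' : j < D -> j' < D -> cw j = cw j' -> j = j'.
  move=> hj hj' e; apply/eqP.
  rewrite -(@nth_uniq _ (zf _) (enum (Cset hV)) j j') ?enum_uniq -?cardE //.
  by rewrite /cw in e; rewrite e.
have Jlt c b : c <= n1 -> b < B -> J c b < D * q.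
  move=> hc hb; rewrite /J; case: eqP => [_|nz].
    apply: leq_trans hC; apply: leq_trans hB; rewrite /q.
    clear -hb; nia.
  have hd : c.-1 < n1 by case: c hc nz.
  apply: leq_trans hC; apply: leq_trans hB; rewrite /q.
  move: (c.-1) hd => d hd; clear -hb hd; nia.
pose w c b := xorf (cw (J c b %/ q)) (ee K (J c b %% q)).
have qpos : 0 < q by [].
have w0 b : w 0 b = cw b.
  by rewrite /w /J eqxx mulnK // modnMl ee0 xorf0.
have wP c b : c <= n1 -> b < B ->
   [/\ w c b = xorf (cw (J c b %/ q)) (ee K (J c b %% q)),
       cw (J c b %/ q) \in Cset hV, J c b %% q <= K & J c b %/ q < D].
  move=> hc hb; have hj : J c b %/ q < D by rewrite ltn_divLR // Jlt.
  split => //; first exact: cwC.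
  by rewrite -ltnS ltn_mod.
have bD : B <= D.
  rewrite -(leq_pmul2r qpos); apply: leq_trans hC; apply: leq_trans hB; rewrite /q.
  clear; nia.
have cwB b : b < B -> cw b \in Cset hV by move=> hb; apply: cwC; exact: leq_trans hb bD.
exists w; split.
- move=> b b' y hb hb' /ball [s hs ey] /ball [s' hs'].
  rewrite ey !w0 => /(phi_inj (cwB b hb) (cwB b' hb') hs hs') [e _].
  by apply: cwI e; apply: leq_trans bD.
- move=> c b b' /andP [c0 hc] hb hb' /ball [s hs].
  case: (wP c b hc hb) => -> hC1 hK hD.
  rewrite w0 => /(phi_inj hC1 (cwB b' hb') hK hs) [e _].
  move/(cwI _ _ hD (leq_trans hb' bD)): e => e.
  move: hb'; rewrite -e ltn_divLR // /J; case: (c =P 0) c0 => [->//|_ _].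
  by rewrite ltnNge leq_addr.
- move=> c c' b b' /andP [c0 hc] /andP [c0' hc'] hb hb'.
  case: (wP c b hc hb) => -> hC1 hK hD.
  case: (wP c' b' hc' hb') => -> hC1' hK' hD'.
  move/(phi_inj hC1 hC1' hK hK') => [] /(cwI _ _ hD hD') e1 e2.
  have : J c b = J c' b' by rewrite (divn_eq (J c b) q) (divn_eq (J c' b') q) e1 e2.
  rewrite /J; case: (c =P 0) c0 => [->//|_ c0]; case: (c' =P 0) c0' => [->//|_ c0'].
  move/eqP; rewrite eqn_add2l => /eqP /(divmod_inj hb hb') [e3 ->]; split => //.
  by move: e3 c0 c0'; clear; case: c => // c; case: c' => // c' /= ->.
Qed.

Definition cidx n (a y : word n) : nat :=
  if [pick i | a i != y i] is Some i then (nat_of_ord i).+1 else 0.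

Lemma cidx0 n (a y : word n) : hdist a y = 0 -> a = y /\ cidx a y = 0.
Proof.
move/hdist0 => ->; split => //; rewrite /cidx; case: pickP => // i.
by rewrite eqxx.
Qed.

Lemma cidx1 n (a y : word n) : hdist a y = 1 ->
  exists p : 'I_n, (forall i, (a i != y i) = (i == p)) /\ cidx a y = p.+1.
Proof.
case/hdist1 => p hp; exists p; split => //; rewrite /cidx; case: pickP.
  by move=> i; rewrite hp => /eqP ->.
by move=> h; have := h p; rewrite hp eqxx.
Qed.

Lemma gen n1 k K (hV : #|V k| = K.+1) :
  exists S : strategy (2 ^ n1 * (2 ^ K %/ (n1 + K + 1))) n1 K,
    transmits_single_error S.
Proof.
have [w [H1 H2 H3]] := code n1 hV.
set B := 2 ^ K %/ (n1 + K + 1) in H1 H2 H3 *.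
have E : 2 ^ n1 * B = #|{: word n1 * 'I_B}| by rewrite card_prod card_word card_ord.
pose pr (m : 'I_(2 ^ n1 * B)) : word n1 * 'I_B := enum_val (cast_ord E m).
have prI : injective pr by move=> m m' /enum_val_inj /cast_ord_inj.
exists (Strategy (fun m => (pr m).1) (fun m y1 => w (cidx (pr m).1 y1) (pr m).2)).
move=> m m' y1 y2 ne.
have key : forall m0, reachable (Strategy (fun m => (pr m).1)
     (fun m y1 => w (cidx (pr m).1 y1) (pr m).2)) m0 y1 y2 ->
   ((pr m0).1 = y1 /\ hdist (w 0 (pr m0).2) y2 <= 1) \/
   (exists p : 'I_n1, (forall i, ((pr m0).1 i != y1 i) = (i == p)) /\
                      y2 = w p.+1 (pr m0).2).
  move=> m0; rewrite /reachable /=.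
  case: (pr m0) => a b /=.
  case hd: (hdist a y1) => [|[|//]].
    by case: (cidx0 hd) => -> ->; left.
  case: (cidx1 hd) => p [hp ->]; rewrite add1n ltnS leqn0 => /eqP /hdist0 <-.
  by right; exists p.
move/key => R; move/key => R'; move: ne.
have prE : pr m = pr m' -> m != m' -> False by move=> /prI ->; rewrite eqxx.
move: prE R R'; case: (pr m) => a b; case: (pr m') => a' b' /= prE.
case=> [[ea hb]|[p [hp ey]]]; case=> [[ea' hb']|[p' [hp' ey']]].
- have eb := H1 b b' y2 (ltn_ord b) (ltn_ord b') hb hb'.
  by apply: prE; congr pair; [rewrite ea ea' | apply: val_inj].
- rewrite ey' in hb; exfalso.
  by apply: (H2 p'.+1 b' b) => //; rewrite ltnS ltn_ord.
- rewrite ey in hb'; exfalso.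
  by apply: (H2 p.+1 b b') => //; rewrite ltnS ltn_ord.
- have e : w p.+1 b = w p'.+1 b' by rewrite -ey -ey'.
  have hc : forall q : 'I_n1, 0 < q.+1 <= n1 by move=> q; rewrite /= ltn_ord.
  have [[ep] eb] := H3 p.+1 p'.+1 b b' (hc p) (hc p') (ltn_ord b) (ltn_ord b') e. apply: prE; congr pair; last exact: val_inj.
  apply/ffunP => i; have := hp i; have := hp' i.
  have -> : p' = p by apply: val_inj.
  by case: (i == p); case: (a i); case: (a' i); case: (y1 i).
Qed.

Theorem corollary1 (k n : nat) :
  1 <= k -> 2 ^ k - 1 <= n ->
  exists S : strategy (2 ^ (n - (2 ^ k - 1)) *
                       (2 ^ (2 ^ k - 1) %/ ((n - (2 ^ k - 1)) + (2 ^ k - 1) + 1)))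
                      (n - (2 ^ k - 1)) (2 ^ k - 1),
    transmits_single_error S.
Proof.
move=> _ _.
have hV : #|V k| = (2 ^ k - 1).+1.
  by rewrite /V card_ffun card_bool card_ord subn1 prednK // expn_gt0.
have := @gen (n - (2 ^ k - 1)) k _ hV. exact.
Qed.
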